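(* Let $n\ge 2$ and let $W$ be a channel from $\{1,2\}$ to $\{1,\dots,n\}$. Then $C_{01}(\lambda)=C_{11}(\lambda)$ for every $\lambda\in\Lambda(W)$; consequently $\underline{C}_{01}(W)=1-\overline{P}_W(1)$ and $\overline{C}_{01}(W)=1-\underline{P}_W(1)$.
   Context: A channel is a row-stochastic matrix. With $\mathcal{X}=\{1,\dots,m\}$ (here $m=2$) and $\mathcal{Y}=\{1,\dots,n\}$, a deterministic channel is a 0-1 channel (a map $D:\mathcal{X}\to\mathcal{Y}$); $\mathcal{D}$ is the set of them and $\mathrm{rank}(D)$ the matrix rank. $\Lambda(W)=\{\lambda\text{ probability distribution on }\mathcal{D}: W=\sum_D\lambda_DD\}$. $I(\mu,K)=\sum_x\mu_x D(K_{x,*}\|\mu K)$ (KL divergence, base 2). $C_{11}(\lambda)=\sum_D\lambda_D\log_2\mathrm{rank}(D)$, $C_{01}(\lambda)=\max_\mu\sum_D\lambda_DI(\mu,D)$ over distributions $\mu$ on $\mathcal{X}$. $\underline{C}_{01}(W)=\inf_{\lambda\in\Lambda(W)}C_{01}(\lambda)$, $\overline{C}_{01}(W)=\sup_{\lambda\in\Lambda(W)}C_{01}(\lambda)$. $P_\lambda(r)=\lambda(\{D:\mathrm{rank}(D)=r\})$, $\underline{P}_W(r)=\min_{\lambda\in\Lambda(W)}P_\lambda(r)$, $\overline{P}_W(r)=\max_{\lambda\in\Lambda(W)}P_\lambda(r)$. *)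

(* Defs.v *)
From HB Require Import structures.
From mathcomp Require Import all_boot all_order all_algebra.
From mathcomp Require Import all_classical all_reals all_analysis.
Set Implicit Arguments. Unset Strict Implicit. Unset Printing Implicit Defensive.
Import Order.TTheory GRing.Theory Num.Theory.
Local Open Scope ring_scope.
Local Open Scope classical_set_scope.

Section Defs.
Variable R : realType.

Definition log2 (x : R) : R := ln x / ln 2.

(* a channel from {1,2} (= 'I_2) to {1..n} (= 'I_n): row-stochastic 2 x n matrix *)
Definition is_channel (n : nat) (W : 'M[R]_(2, n)) : Prop :=
  (forall i j, 0 <= W i j) /\ (forall i, \sum_j W i j = 1).

(* deterministic channels are maps 'I_2 -> 'I_n; their 0-1 matrix *)
Definition det_mx (n : nat) (D : {ffun 'I_2 -> 'I_n}) : 'M[R]_(2, n) :=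
  \matrix_(i, j) (D i == j)%:R.

Definition rankD (n : nat) (D : {ffun 'I_2 -> 'I_n}) : nat := \rank (det_mx D).

Definition is_dist (T : finType) (p : T -> R) : Prop :=
  (forall t, 0 <= p t) /\ \sum_t p t = 1.

Definition Lambda (n : nat) (W : 'M[R]_(2, n)) : set ({ffun 'I_2 -> 'I_n} -> R) :=
  [set lam | is_dist lam /\ W = \sum_D lam D *: det_mx D].

Definition outdist (n : nat) (mu : 'I_2 -> R) (K : 'M[R]_(2, n)) (y : 'I_n) : R :=
  \sum_x mu x * K x y.

Definition KL (n : nat) (p q : 'I_n -> R) : R :=
  \sum_y (if p y == 0 then 0 else p y * log2 (p y / q y)).

Definition MI (n : nat) (mu : 'I_2 -> R) (K : 'M[R]_(2, n)) : R :=
  \sum_x mu x * KL (fun y => K x y) (outdist mu K).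

Definition C11 (n : nat) (lam : {ffun 'I_2 -> 'I_n} -> R) : R :=
  \sum_D lam D * log2 (rankD D)%:R.

(* C01(lam) = max_mu sum_D lam_D I(mu, D)  (stated as a supremum) *)
Definition C01 (n : nat) (lam : {ffun 'I_2 -> 'I_n} -> R) : R :=
  sup [set \sum_D lam D * MI mu (det_mx D) | mu in [set mu : 'I_2 -> R | is_dist mu]].

Definition Plam (n : nat) (r : nat) (lam : {ffun 'I_2 -> 'I_n} -> R) : R :=
  \sum_(D | rankD D == r) lam D.

Definition C01_lower (n : nat) (W : 'M[R]_(2, n)) : R :=
  inf [set C01 lam | lam in Lambda W].
Definition C01_upper (n : nat) (W : 'M[R]_(2, n)) : R :=
  sup [set C01 lam | lam in Lambda W].
Definition P_lower (n : nat) (W : 'M[R]_(2, n)) (r : nat) : R :=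
  inf [set Plam r lam | lam in Lambda W].
Definition P_upper (n : nat) (W : 'M[R]_(2, n)) (r : nat) : R :=
  sup [set Plam r lam | lam in Lambda W].

End Defs.

(* Main.v *)
Require Import Defs.
From HB Require Import structures.
From mathcomp Require Import all_boot all_order all_algebra.
From mathcomp Require Import all_classical all_reals all_analysis.
From mathcomp Require Import ring lra.
Import Order.TTheory GRing.Theory Num.Theory.
Local Open Scope ring_scope.
Local Open Scope classical_set_scope.
Section S.
Context {R : realType}.
Lemma sum2 (F : 'I_2 -> R) : \sum_i F i = F ord0 + F ord_max.
Proof. rewrite big_ord_recr /= big_ord_recl big_ord0 addr0; congr (F _ + _); exact: val_inj. Qed.
Lemma log2_1 : log2 (1 : R) = 0.
Proof. by rewrite /log2 ln1 mul0r. Qed.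
Lemma ln2_gt0 : 0 < ln (2 : R).
Proof. by apply: ln_gt0; rewrite ltr1n. Qed.
Lemma log2_2 : log2 (2 : R) = 1.
Proof. by rewrite /log2 divff // gt_eqF // ln2_gt0. Qed.
Lemma ent_le (p : R) : 0 <= p -> p * ln p^-1 <= 2^-1 - p + p * ln 2.
Proof.
move=> p0; have [->|pn0] := eqVneq p 0; first by rewrite !mul0r subr0 addr0 invr_ge0 ler0n.
have pp : 0 < p by rewrite lt_neqAle eq_sym pn0.
have h : ln ((2 * p)^-1) <= (2 * p)^-1 - 1.
  have := @le_ln1Dx R ((2 * p)^-1 - 1); rewrite addrCA subrr addr0; apply.
  have := @invr_gt0 R (2 * p); rewrite mulr_gt0 // ?ltr0n // => h1; lra.
have e : ln p^-1 = ln ((2 * p)^-1) + ln 2.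
  rewrite -lnM ?posrE ?invr_gt0 ?mulr_gt0 //; congr ln.
  by rewrite invfM mulrAC mulVf // mul1r.
rewrite e mulrDr lerD2r.
have := ler_wpM2l p0 h; rewrite mulrBr mulr1 invfM mulrA mulrAC mulfV // mul1r.
by [].
Qed.
Lemma I2_cases (i : 'I_2) : i = ord0 \/ i = ord_max.
Proof. case: i => [[|[|k]] h]; [left|right|]; try exact: val_inj. done. Qed.

Lemma rankD_val n (D : {ffun 'I_2 -> 'I_n}) :
  rankD R D = if D ord0 == D ord_max then 1%N else 2%N.
Proof.
rewrite /rankD; case: eqP => hD.
- have -> : det_mx R D = const_mx 1 *m (\row_j (D ord0 == j)%:R : 'rV[R]_n).
    apply/matrixP => i j; rewrite !mxE big_ord1 !mxE mul1r.
    by case: (I2_cases i) => ->; rewrite ?hD.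
  apply/eqP; rewrite eqn_leq (leq_trans (mxrankM_maxr _ _)) ?rank_leq_row //=.
  rewrite lt0n mxrank_eq0; apply/eqP => /matrixP /(_ ord0 (D ord0)).
  rewrite !mxE big_ord1 !mxE eqxx mul1r => /eqP; rewrite oner_eq0.
  done.
- apply/eqP; change (row_free (det_mx R D)); apply/row_freeP.
  exists (\matrix_(j, k) (j == D k)%:R); apply/matrixP => i k.
  rewrite !mxE (bigD1 (D i)) //= big1 ?addr0.
    rewrite !mxE eqxx mul1r; case: (I2_cases i) => ->; case: (I2_cases k) => ->;
      rewrite ?eqxx //.
    + by move/eqP: hD => /negbTE ->.
    + by rewrite eq_sym; move/eqP: hD => /negbTE ->.
  by move=> j /negbTE hj; rewrite !mxE eq_sym hj mul0r.
Qed.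
Definition H (mu : 'I_2 -> R) :=
  mu ord0 * log2 (mu ord0)^-1 + mu ord_max * log2 (mu ord_max)^-1.

Lemma KL_det n (D : {ffun 'I_2 -> 'I_n}) (q : 'I_n -> R) x :
  KL (fun y => det_mx R D x y) q = log2 (q (D x))^-1.
Proof.
rewrite /KL (bigD1 (D x)) //= big1 ?addr0.
  by rewrite !mxE eqxx oner_eq0 !mul1r.
by move=> j; rewrite eq_sym => /negbTE hj; rewrite !mxE hj eqxx.
Qed.

Lemma MI_det n (D : {ffun 'I_2 -> 'I_n}) (mu : 'I_2 -> R) : is_dist mu ->
  MI mu (det_mx R D) = if D ord0 == D ord_max then 0 else H mu.
Proof.
case=> _ hs; rewrite /MI; under eq_bigr do rewrite KL_det /outdist.
rewrite sum2 in hs.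
rewrite sum2 !sum2 !mxE !eqxx; case: (eqVneq (D ord0) (D ord_max)) => hD.
  by rewrite !mulr1 hs invr1 log2_1 !mulr0 addr0.
by rewrite !mulr0 !mulr1 addr0 add0r.
Qed.

Lemma H_le1 (mu : 'I_2 -> R) : is_dist mu -> H mu <= 1.
Proof.
case=> h0 hs; rewrite sum2 in hs; rewrite /H /log2 !mulrA -mulrDl.
rewrite ler_pdivrMr ?ln2_gt0 // mul1r.
have := ent_le _ (h0 ord0); have := ent_le _ (h0 ord_max).
have -> : mu ord_max = 1 - mu ord0 by rewrite -hs addrC addKr.
have h2 : (2:R)^-1 + 2^-1 = 1.
  by rewrite -mulr2n -[_ *+ 2]mulr_natr mulVf ?pnatr_eq0.
have hy : (1 - mu ord0) * ln (R:=R) 2 = ln 2 - mu ord0 * ln 2 by rewrite mulrBl mul1r.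
rewrite hy.
move: (mu ord0 * ln (mu ord0)^-1) (mu ord0 * ln 2) ((1 - mu ord0) * ln (1 - mu ord0)^-1) => x y z.
move: (ln (R:=R) 2) ((2:R)^-1) h2 => L t h2.
lra.
Qed.

Definition half : 'I_2 -> R := fun=> 2^-1.

Lemma half_dist : is_dist half.
Proof.
split; first by move=> ?; rewrite /half invr_ge0 ler0n.
by rewrite sum2 /half -mulr2n -[_ *+ 2]mulr_natr mulVf ?pnatr_eq0.
Qed.

Lemma H_half : H half = 1.
Proof.
by rewrite /H /half invrK log2_2 !mulr1 -mulr2n -[_ *+ 2]mulr_natr mulVf ?pnatr_eq0.
Qed.
Definition P2 {n} (lam : {ffun 'I_2 -> 'I_n} -> R) := \sum_(D : {ffun 'I_2 -> 'I_n} | D ord0 != D ord_max) lam D.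

Lemma P2_ge0 n (lam : {ffun 'I_2 -> 'I_n} -> R) : is_dist lam -> 0 <= P2 lam.
Proof. by case=> h0 _; apply: sumr_ge0 => D _. Qed.

Lemma sumMI n (lam : {ffun 'I_2 -> 'I_n} -> R) mu : is_dist mu ->
  \sum_D lam D * MI mu (det_mx R D) = P2 lam * H mu.
Proof.
move=> hmu; rewrite /P2 mulr_suml [RHS]big_mkcond.
apply: eq_bigr => D _.
rewrite MI_det //; case: (D ord0 == D ord_max) => /=.
  by rewrite mulr0.
done.
Qed.

Lemma C01_val n (lam : {ffun 'I_2 -> 'I_n} -> R) : is_dist lam -> C01 lam = P2 lam.
Proof.
move=> hl; rewrite /C01; apply/eqP; rewrite eq_le; apply/andP; split.
  apply: ge_sup; first by exists (\sum_D lam D * MI half (det_mx R D)); exists half => //; exact: half_dist.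
  move=> y [mu hmu <-]; rewrite sumMI //.
  by rewrite ler_piMr ?P2_ge0 ?H_le1.
apply: ub_le_sup.
  exists (P2 lam) => y [mu hmu <-]; rewrite sumMI //.
  by rewrite ler_piMr ?P2_ge0 ?H_le1.
exists half; first exact: half_dist.
by rewrite sumMI ?H_half ?mulr1 //; exact: half_dist.
Qed.

Lemma C11_val n (lam : {ffun 'I_2 -> 'I_n} -> R) : C11 lam = P2 lam.
Proof.
rewrite /C11 /P2 [RHS]big_mkcond; apply: eq_bigr => D _.
rewrite rankD_val; case: (D ord0 == D ord_max) => /=.
  by rewrite log2_1 mulr0.
by rewrite log2_2 mulr1.
Qed.

Lemma Plam1_val n (lam : {ffun 'I_2 -> 'I_n} -> R) : is_dist lam -> Plam 1 lam = 1 - P2 lam.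
Proof.
case=> _ hs; rewrite -hs (bigID (fun D : {ffun 'I_2 -> 'I_n} => D ord0 == D ord_max)) /=.
rewrite /P2 addrK /Plam; apply: eq_bigl => D.
by rewrite rankD_val; case: (D ord0 == D ord_max).
Qed.

Lemma sup_shift (T : Type) (S : set T) (f : T -> R) (c : R) : S !=set0 ->
  (exists M, forall x, S x -> f x <= M) ->
  sup [set c + f x | x in S] = c + sup (f @` S).
Proof.
move=> [x0 Sx0] [M hM].
have ubf : has_ubound (f @` S) by exists M => y [x Sx <-]; exact: hM.
have ubg : has_ubound [set c + f x | x in S].
  by exists (c + M) => y [x Sx <-]; rewrite lerD2l; exact: hM.
apply/eqP; rewrite eq_le; apply/andP; split.
- apply: ge_sup; first by exists (c + f x0), x0.
  move=> y [x Sx <-]; rewrite lerD2l; by apply: ub_le_sup => //; exists x.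
- rewrite -lerBrDl; apply: ge_sup; first by exists (f x0), x0.
  move=> y [x Sx <-]; rewrite lerBrDl; by apply: ub_le_sup => //; exists x.
Qed.
Lemma prod2 (F : 'I_2 -> R) : \prod_i F i = F ord0 * F ord_max.
Proof. by rewrite big_ord_recr /= big_ord_recl big_ord0 mulr1; congr (F _ * _); exact: val_inj. Qed.

Lemma sum_ffun2 n (F G : 'I_n -> R) :
  \sum_(D : {ffun 'I_2 -> 'I_n}) F (D ord0) * G (D ord_max) = (\sum_j F j) * (\sum_j G j).
Proof.
have := @bigA_distr_bigA R 0 1 *%R +%R _ _ (fun (i : 'I_2) (j : 'I_n) => if i == ord0 then F j else G j).
rewrite prod2 /= => ->; apply: eq_bigr => D _; by rewrite prod2.
Qed.

Lemma sum_delta n (F : 'I_n -> R) j : \sum_k F k * (k == j)%:R = F j.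
Proof.
rewrite (bigD1 j) //= eqxx mulr1 big1 ?addr0 //.
by move=> k /negbTE ->; rewrite mulr0.
Qed.

Lemma Lambda_ne n (W : 'M[R]_(2, n)) : is_channel W ->
  Lambda W (fun D => W ord0 (D ord0) * W ord_max (D ord_max)).
Proof.
case=> hpos hrow; split; [split|].
- by move=> D; apply: mulr_ge0.
- by rewrite sum_ffun2 !hrow mulr1.
apply/matrixP => i j; rewrite summxE.
under eq_bigr do rewrite !mxE.
case: (I2_cases i) => ->.
- under eq_bigr do rewrite mulrAC.
  by rewrite (sum_ffun2 _ (fun k => W ord0 k * (k == j)%:R)) sum_delta hrow mulr1.
- under eq_bigr do rewrite -mulrA.
  by rewrite (sum_ffun2 _ _ (fun k => W ord_max k * (k == j)%:R)) sum_delta hrow mul1r.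
Qed.
End S.

Theorem proposition1 (R : realType) (n : nat) (hn : (2 <= n)%N)
    (W : 'M[R]_(2, n)) (hW : is_channel W) :
  (forall lam, Lambda W lam -> C01 lam = C11 lam) /\
  C01_lower W = 1 - P_upper W 1 /\
  C01_upper W = 1 - P_lower W 1.
Proof.
have hC : forall lam, Lambda W lam -> C01 lam = 1 - Plam 1 lam.
  by move=> lam [hl _]; rewrite C01_val // Plam1_val // opprB addrCA subrr addr0.
have ne : Lambda W !=set0 by eexists; exact: Lambda_ne hW.
have bnd : forall lam, Lambda W lam -> 0 <= Plam 1 lam /\ Plam 1 lam <= 1.
  move=> lam [hl _]; have h0 : 0 <= Plam 1 lam.
    by case: hl => hp _; apply: sumr_ge0.
  have := Plam1_val _ _ hl; have := P2_ge0 _ _ hl.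
  move: (P2 lam) (Plam 1 lam) h0 => a b; lra.
split; first by move=> lam [hl _]; rewrite C01_val // C11_val.
split.
- rewrite /C01_lower /inf image_comp (eq_imagel (f' := fun lam => -1 + Plam 1 lam)).
    rewrite sup_shift //; last by exists 1 => lam /bnd [].
    by rewrite /P_upper opprD opprK.
  by move=> lam hl /=; rewrite hC // opprB addrC.
- rewrite /C01_upper /P_lower /inf image_comp (eq_imagel (f' := fun lam => 1 + - Plam 1 lam)).
    rewrite sup_shift //; last by exists 0 => lam /bnd [h _]; rewrite oppr_le0.
    by rewrite opprK.
  by move=> lam hl; rewrite hC.
Qed.
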